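(* Let $(X_j,Y_j,S_j)$, $j\in\mathbb{Z}$, be a FAIM process. Then there exists a non-increasing sequence $\psi(N)$ with $\psi(N)\to1$ as $N\to\infty$ and $\psi(0)<\infty$ such that for all $N>M\ge L\ge1$, \[P_{X_1^L,Y_1^L,X_{M+1}^N,Y_{M+1}^N}\le\psi(M-L)\cdot P_{X_1^L,Y_1^L}\cdot P_{X_{M+1}^N,Y_{M+1}^N}\] (pointwise, for all realizations).
   Context: FAIM process: $(X_j,Y_j,S_j)$, $j\in\mathbb{Z}$, is strictly stationary, $X_j\in\{0,1\}$, $Y_j$ takes values in a finite alphabet, $S_j$ in a finite set $\mathcal{S}$; the conditional law $P_{X_j,Y_j,S_j|S_{j-1}}$ does not depend on $j$; and conditioned on $S_{j-1}$, $\{X_k,Y_k,S_k\}_{k\ge j}$ is independent of $\{X_l,Y_l,S_{l-1}\}_{l<j}$. The state sequence $(S_j)$ is a homogeneous, finite-state, stationary, aperiodic and irreducible Markov chain. *)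

(* Defs.v *)
From HB Require Import structures.
From mathcomp Require Import all_boot all_order all_algebra.
From mathcomp Require Import all_classical all_reals all_analysis.
Set Implicit Arguments. Unset Strict Implicit. Unset Printing Implicit Defensive.
Import Order.TTheory GRing.Theory Num.Theory.
Local Open Scope classical_set_scope.
Local Open Scope ring_scope.

Definition Pr (R : realType) (d : measure_display) (T : measurableType d)
  (P : probability T R) (A : set T) : R := fine (P A).

Section FAIM.
Context (R : realType) (d : measure_display) (T : measurableType d)
  (B St : finType) (P : probability T R)
  (X : int -> T -> bool) (Y : int -> T -> B) (S : int -> T -> St).

Definition cylXYS (I : seq int) (t : int) (a : int -> bool) (b : int -> B)
  (c : int -> St) : set T :=
  [set w | forall k, k \in I -> [/\ X (k + t) w = a k, Y (k + t) w = b k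
                                  & S (k + t) w = c k]].

Definition futureXYS (j : int) (n : nat) (a : int -> bool) (b : int -> B)
  (c : int -> St) : set T :=
  [set w | forall k : nat, (k < n)%N ->
     [/\ X (j + k%:Z) w = a (j + k%:Z), Y (j + k%:Z) w = b (j + k%:Z)
       & S (j + k%:Z) w = c (j + k%:Z)]].

Definition pastXYS (j : int) (m : nat) (a : int -> bool) (b : int -> B)
  (c : int -> St) : set T :=
  [set w | forall k : nat, (1 <= k <= m)%N ->
     [/\ X (j - k%:Z) w = a (j - k%:Z), Y (j - k%:Z) w = b (j - k%:Z)
       & S (j - k%:Z - 1) w = c (j - k%:Z)]].

Definition pastS (j : int) (m : nat) (c : nat -> St) : set T :=
  [set w | forall k : nat, (1 <= k <= m)%N -> S (j - 1 - k%:Z) w = c k].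

Definition ptransS (n : nat) (s s' : St) : R :=
  Pr P ([set w | S 0 w = s] `&` [set w | S n%:Z w = s']) /
  Pr P [set w | S 0 w = s].

Record FAIM : Prop := {
  FAIM_measX : forall k x, measurable (X k @^-1` [set x]);
  FAIM_measY : forall k y, measurable (Y k @^-1` [set y]);
  FAIM_measS : forall k s, measurable (S k @^-1` [set s]);
  FAIM_stationary : forall I t a b c, Pr P (cylXYS I t a b c) = Pr P (cylXYS I 0 a b c);
  FAIM_homogeneous : forall (j j' : int) x y s s0,
    Pr P ([set w | [/\ X j w = x, Y j w = y, S j w = s & S (j - 1) w = s0]]) /
      Pr P [set w | S (j - 1) w = s0] =
    Pr P ([set w | [/\ X j' w = x, Y j' w = y, S j' w = s & S (j' - 1) w = s0]]) /
      Pr P [set w | S (j' - 1) w = s0];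
  FAIM_condindep : forall j n m a b c a' b' c' s0,
    let C := [set w | S (j - 1) w = s0] in
    Pr P (futureXYS j n a b c `&` C `&` pastXYS j m a' b' c') * Pr P C =
    Pr P (futureXYS j n a b c `&` C) * Pr P (C `&` pastXYS j m a' b' c');
  FAIM_S_markov : forall j m s s0 c,
    let C := [set w | S (j - 1) w = s0] in
    Pr P ([set w | S j w = s] `&` C `&` pastS j m c) * Pr P C =
    Pr P ([set w | S j w = s] `&` C) * Pr P (C `&` pastS j m c);
  FAIM_irreducible : forall s s', exists n : nat, (0 < n)%N /\ 0 < ptransS n s s';
  FAIM_aperiodic : forall s, ~ exists dd : nat, (1 < dd)%N /\
     forall n : nat, (0 < n)%N -> 0 < ptransS n s s -> (dd %| n)%N
}.

Definition blockXY (lo hi : nat) (x : int -> bool) (y : int -> B) : set T :=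
  [set w | forall k : nat, (lo <= k <= hi)%N ->
     X k%:Z w = x k%:Z /\ Y k%:Z w = y k%:Z].

End FAIM.

(* Main.v *)
Require Import Defs.
From HB Require Import structures.
From mathcomp Require Import all_boot all_order all_algebra.
From mathcomp Require Import all_classical all_reals all_analysis.
From mathcomp Require Import zify ring lra.
Import Order.TTheory GRing.Theory Num.Theory numFieldNormedType.Exports.
Local Open Scope classical_set_scope.
Local Open Scope ring_scope.

Section Basic.
Context (R : realType) (d : measure_display) (T : measurableType d)
  (P : probability T R).

Lemma Pr_ge0 A : 0 <= Pr P A.
Proof. by rewrite /Pr fine_ge0 // measure_ge0. Qed.

Lemma Pr_fin A : measurable A -> P A \is a fin_num.
Proof. move=> mA; exact: fin_num_measure. Qed.

Lemma Pr0 : Pr P set0 = 0.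
Proof. by rewrite /Pr measure0. Qed.

Lemma PrU A B : measurable A -> measurable B -> A `&` B = set0 ->
  Pr P (A `|` B) = Pr P A + Pr P B.
Proof. by move=> mA mB AB; rewrite /Pr measureU // fineD // Pr_fin. Qed.

Lemma Pr_le A B : measurable A -> measurable B -> A `<=` B -> Pr P A <= Pr P B.
Proof.
move=> mA mB AB; rewrite /Pr fine_le ?Pr_fin //.
by apply: le_measure => //; rewrite inE.
Qed.

Lemma Pr_le1 A : measurable A -> Pr P A <= 1.
Proof.
move=> mA; have -> : (1 : R) = Pr P setT by rewrite /Pr probability_setT.
by apply: Pr_le => //.
Qed.

Lemma meas_forall (V : finType) (Q : V -> set T) :
  (forall i, measurable (Q i)) -> measurable [set w | forall i, Q i w].
Proof.
move=> mQ.
suff H : forall r : seq V, measurable [set w | forall i, i \in r -> Q i w].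
  have -> : [set w | forall i, Q i w] =
            [set w | forall i, i \in index_enum V -> Q i w].
    apply/seteqP; split => w /= Hw i.
      by move=> _; apply: Hw.
    by apply: Hw; rewrite mem_index_enum.
  exact: H.
elim=> [|a r IH].
  have -> : [set w | forall i, i \in [::] -> Q i w] = setT by
    apply/seteqP; split => w //=.
  exact: measurableT.
have -> : [set w | forall i, i \in a :: r -> Q i w] =
          Q a `&` [set w | forall i, i \in r -> Q i w].
  apply/seteqP; split => w /=.
    by move=> Hw; split; [apply: Hw; rewrite inE eqxx | move=> i ir; apply: Hw; rewrite inE ir orbT].
  by move=> [Qa Hr] i; rewrite inE => /orP [/eqP -> //| /Hr].
exact: measurableI.
Qed.

Lemma Pr_fiber (V : finType) (f : T -> V) (Z : set T) :
  (forall v, measurable (Z `&` f @^-1` [set v])) ->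
  measurable Z /\ Pr P Z = \sum_(v : V) Pr P (Z `&` f @^-1` [set v]).
Proof.
move=> mZ.
suff H : forall r : seq V, uniq r ->
   measurable [set w | Z w /\ f w \in r] /\
   Pr P [set w | Z w /\ f w \in r] = \sum_(v <- r) Pr P (Z `&` f @^-1` [set v]).
  have [m e] := H _ (index_enum_uniq V).
  have EZ : Z = [set w | Z w /\ f w \in index_enum V].
    by apply/seteqP; split => w /=; [move=> Zw; split => //; rewrite mem_index_enum | case].
  by rewrite -EZ in m e.
elim=> [|a r IH] /=.
  move=> _; have -> : [set w | Z w /\ f w \in [::]] = set0.
    by apply/seteqP; split => w //= [].
  by rewrite big_nil Pr0; split => //; exact: measurable0.
move=> /andP [ar ur]; have [IHm IHe] := IH ur.
have -> : [set w | Z w /\ f w \in a :: r] =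
          (Z `&` f @^-1` [set a]) `|` [set w | Z w /\ f w \in r].
  apply/seteqP; split => w /=.
    by case=> Zw; rewrite inE => /orP [/eqP ->|fr]; [left|right].
  by case=> [[Zw ->]|[Zw fr]]; split => //; rewrite inE ?eqxx ?fr ?orbT.
split; first exact: measurableU.
rewrite PrU // ?big_cons ?IHe //.
apply/seteqP; split => w //= [[Zw fa] [_ fr]].
by move: ar; rewrite -fa fr.
Qed.

End Basic.

Section NT.
Variable Q : nat -> Prop.
Hypothesis Qadd : forall a b, Q a -> Q b -> Q (a + b)%N.
Hypothesis Qpos : forall n, Q n -> (0 < n)%N.

Definition Q0 x := x = 0%N \/ Q x.

Lemma Q0add a b : Q0 a -> Q0 b -> Q0 (a + b)%N.
Proof.
case=> [->|Qa]; first by rewrite add0n.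
case=> [->|Qb]; first by rewrite addn0; right.
by right; apply: Qadd.
Qed.

Lemma Q0mul q b : Q0 b -> Q0 (q * b)%N.
Proof.
move=> Qb; elim: q => [|q IH]; first by left; rewrite mul0n.
by rewrite mulSn; apply: Q0add.
Qed.

Lemma QQ0add a b : Q a -> Q0 b -> Q (a + b)%N.
Proof. by move=> Qa [->|Qb]; [rewrite addn0 | apply: Qadd]. Qed.

Lemma Qmul q b : (0 < q)%N -> Q b -> Q (q * b)%N.
Proof.
case: q => // q _ Qb; rewrite mulSn; apply: QQ0add => //; apply: Q0mul; by right.
Qed.

Lemma semigroup_eventually : (exists n, Q n) ->
  ~ (exists dd : nat, (1 < dd)%N /\ forall n, Q n -> (dd %| n)%N) ->
  exists N, forall n, (N <= n)%N -> Q n.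
Proof.
move=> [n0 Qn0] aper.
pose D r := exists a b, [/\ Q0 a, Q0 b & a = (b + r)%N].
have exD : exists r, `[< (0 < r)%N /\ D r >].
  exists n0; apply/asboolP; split; first exact: Qpos.
  by exists n0, 0%N; split; [right | left | rewrite add0n].
case: (ex_minnP exD) => d0 /asboolP [d0pos [a [b [Qa Qb ab]]]] dmin.
have ddiv : forall s, Q s -> (d0 %| s)%N.
  move=> s Qs; rewrite /dvdn; apply/eqP.
  have se := divn_eq s d0.
  set q := (s %/ d0)%N in se; set r := (s %% d0)%N in se *.
  have rlt : (r < d0)%N by rewrite ltn_pmod.
  case: (posnP r) => // rpos.
  have : (d0 <= r)%N.
    apply: dmin; apply/asboolP; split => //.
    exists (s + q * b)%N, (q * a)%N; split.
    - by apply: Q0add; [right | apply: Q0mul].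
    - exact: Q0mul.
    - rewrite ab mulnDr {1}se; lia.
  by rewrite leqNgt rlt.
have d01 : d0 = 1%N.
  case: (ltngtP d0 1) => // [|d0gt].
    by rewrite ltnS leqn0 => /eqP d00; move: d0pos; rewrite d00.
  by exfalso; apply: aper; exists d0; split.
rewrite d01 in ab.
case: (posnP b) => [b0|bpos].
  have Q1 : Q 1%N.
    by case: Qa => [a0|]; [move: a0; rewrite ab b0 | rewrite ab b0].
  exists 1%N => n n1; rewrite -(muln1 n); exact: Qmul.
have Qb' : Q b by case: Qb => // b0; move: bpos; rewrite b0.
exists (b * b)%N => n nbb.
have ne := divn_eq n b.
set q := (n %/ b)%N in ne; set r := (n %% b)%N in ne *.
have rlt : (r < b)%N by rewrite ltn_pmod.
have qb : (b <= q)%N.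
  rewrite leqNgt; apply/negP => qlt; move: nbb; rewrite ne; nia.
have rq : (r <= q)%N by lia.
clearbody q r.
have -> : n = ((q - r) * b + r * a)%N.
  rewrite ne ab mulnBl mulnDr muln1 addnA subnK //; last by apply: leq_mul.
apply: QQ0add; last exact: Q0mul.
by apply: Qmul => //; lia.
Qed.
End NT.

Section Chain.
Variables (R : realType) (St : finType) (pk : nat -> St -> St -> R) (pi : St -> R).
Hypotheses (pk_ge0 : forall n i k, 0 <= pk n i k)
  (rowsum : forall n i, \sum_k pk n i k = 1)
  (CK : forall m n i k, pk (m + n)%N i k = \sum_j pk m i j * pk n j k)
  (stat : forall n k, \sum_i pi i * pk n i k = pi k)
  (pi_pos : forall s, 0 < pi s) (pi_sum : \sum_s pi s = 1)
  (irr : forall s s', exists n : nat, (0 < n)%N /\ 0 < pk n s s')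
  (aper : forall s, ~ exists dd : nat, (1 < dd)%N /\
     forall n : nat, (0 < n)%N -> 0 < pk n s s -> (dd %| n)%N).

Lemma sum_ge_term (I : finType) (f : I -> R) j : (forall i, 0 <= f i) -> f j <= \sum_i f i.
Proof. by move=> h; rewrite (bigD1 j) //= lerDl sumr_ge0. Qed.

Lemma pk_mul a b i j k : pk a i j * pk b j k <= pk (a + b) i k.
Proof.
rewrite CK; apply: (sum_ge_term _ (fun j => pk a i j * pk b j k) j) => l.
by apply: mulr_ge0.
Qed.

Lemma pk_le1 n i k : pk n i k <= 1.
Proof. by rewrite -(rowsum n i); apply: (sum_ge_term _ (fun k => pk n i k) k). Qed.

Lemma eventually_pos s : exists N, forall n, (N <= n)%N -> 0 < pk n s s.
Proof.
have := semigroup_eventually (fun n => (0 < n)%N /\ 0 < pk n s s).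
case.
- move=> a b [a0 pa] [b0 pb]; split; first by rewrite addn_gt0 a0.
  apply: lt_le_trans (pk_mul a b s s s); exact: mulr_gt0.
- by move=> n [].
- exact: irr.
- move=> [dd [dd1 hd]]; apply: (aper s); exists dd; split => // n n0 pn.
  exact: hd.
- by move=> N HN; exists N => n Nn; case: (HN n Nn).
Qed.

Lemma primitive : exists n0, forall i k, 0 < pk n0 i k.
Proof.
have [Nf HN] := choice eventually_pos.
have [rf Hr] := choice (fun p : St * St => irr p.1 p.2).
exists (\max_s Nf s + \max_p rf p)%N => i k.
set n0 := (_ + _)%N.
have r1 := leq_bigmax (F := rf) (i, k).
have N1 := leq_bigmax (F := Nf) i.
have rle : (rf (i, k) <= n0)%N by rewrite /n0; lia.
rewrite -(subnK rle).
apply: lt_le_trans (pk_mul _ _ i i k); apply: mulr_gt0.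
  by apply: HN; rewrite /n0; lia.
by case: (Hr (i, k)).
Qed.

Lemma doeblin : exists n0 dl, [/\ 0 < dl, dl <= 1 & forall i k, dl <= pk n0 i k].
Proof.
have [n0 Hn0] := primitive.
exists n0, (\big[Order.min/1]_(p : St * St) pk n0 p.1 p.2); split.
- by apply: lt_bigmin => // p _; exact: Hn0.
- elim/big_ind: _ => // [x y hx hy|p _].
    by rewrite ge_min hx.
  exact: pk_le1.
- by move=> i k; apply: (bigmin_le _ (i, k) (fun p : St * St => pk n0 p.1 p.2)).
Qed.

Definition O n := \big[Order.max/0]_(q : St * St * St) `|pk n q.1.1 q.2 - pk n q.1.2 q.2|.

Lemma O_ge n i j k : pk n i k - pk n j k <= O n.
Proof.
apply: le_trans (ler_norm _) _.
exact: (le_bigmax 0 (fun q : St * St * St => `|pk n q.1.1 q.2 - pk n q.1.2 q.2|) ((i, j), k)).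
Qed.

Lemma O_ge0 n : 0 <= O n.
Proof. by rewrite /O; elim/big_ind: _ => // x y hx hy; rewrite le_max hx. Qed.

Lemma O_le n c : 0 <= c -> (forall i j k, pk n i k - pk n j k <= c) -> O n <= c.
Proof.
move=> c0 h; apply: bigmax_le => // q _.
rewrite ler_norml h andbT lerNl opprB; exact: h.
Qed.

Lemma O_le1 n : O n <= 1.
Proof.
apply: O_le => // i j k; apply: le_trans (pk_le1 n i k).
by rewrite lerBlDr lerDl.
Qed.

Lemma sumQQ a i j : \sum_l \sum_l' pk a i l * pk a j l' = 1.
Proof.
under eq_bigr => l _ do rewrite -big_distrr /= rowsum mulr1.
exact: rowsum.
Qed.

Lemma sumQQc a i j c : \sum_l \sum_l' pk a i l * pk a j l' * c = c.
Proof.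
rewrite -[RHS]mul1r -(sumQQ a i j) big_distrl; apply: eq_bigr => l _.
by rewrite big_distrl.
Qed.

Lemma diff_expand a n i j k : pk (a + n) i k - pk (a + n) j k =
  \sum_l \sum_l' pk a i l * pk a j l' * (pk n l k - pk n l' k).
Proof.
have e1 : \sum_l \sum_l' pk a i l * pk a j l' * pk n l k = pk (a + n) i k.
  rewrite CK; apply: eq_bigr => l _.
  under eq_bigr => l' _ do rewrite mulrAC.
  by rewrite -big_distrr /= rowsum mulr1.
have e2 : \sum_l \sum_l' pk a i l * pk a j l' * pk n l' k = pk (a + n) j k.
  under eq_bigr => l _ do (under eq_bigr => l' _ do rewrite -mulrA; rewrite -big_distrr /= -CK).
  by rewrite -big_distrl /= rowsum mul1r.
rewrite -e1 -e2 -sumrB; apply: eq_bigr => l _.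
rewrite -sumrB; apply: eq_bigr => l' _.
by rewrite mulrBr.
Qed.

Lemma O_mono1 a n : O (a + n) <= O n.
Proof.
apply: O_le; first exact: O_ge0.
move=> i j k; rewrite diff_expand -(sumQQc a i j (O n)).
apply: ler_sum => l _; apply: ler_sum => l' _.
by apply: ler_wpM2l; [apply: mulr_ge0 | apply: O_ge].
Qed.

Lemma O_mono m n : (m <= n)%N -> O n <= O m.
Proof. by move=> mn; rewrite -(subnK mn); apply: O_mono1. Qed.

Lemma O_contract n0 dl n : dl <= 1 -> (forall i k, dl <= pk n0 i k) ->
  O (n0 + n) <= (1 - dl) * O n.
Proof.
move=> hdl1 hdl; apply: O_le.
  by apply: mulr_ge0; [rewrite subr_ge0 | exact: O_ge0].
move=> i j k; rewrite diff_expand.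
apply: le_trans (_ : \sum_l \sum_l' (pk n0 i l * pk n0 j l' -
   (l == l')%:R * (pk n0 i l * pk n0 j l')) * O n <= _).
  apply: ler_sum => l _; apply: ler_sum => l' _.
  case: (eqVneq l l') => [<-|nl].
    by rewrite subrr mulr0 mul1r subrr mul0r.
  by rewrite mul0r subr0; apply: ler_wpM2l; [apply: mulr_ge0 | apply: O_ge].
have -> : \sum_l \sum_l' (pk n0 i l * pk n0 j l' -
   (l == l')%:R * (pk n0 i l * pk n0 j l')) * O n =
   (1 - \sum_l pk n0 i l * pk n0 j l) * O n.
  have e : forall l, \sum_l' (pk n0 i l * pk n0 j l' -
     (l == l')%:R * (pk n0 i l * pk n0 j l')) * O n =
     \sum_l' pk n0 i l * pk n0 j l' * O n - pk n0 i l * pk n0 j l * O n.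
    move=> l; rewrite (bigD1 l) //= [in RHS](bigD1 l) //= eqxx mul1r subrr mul0r add0r.
    rewrite addrAC subrr add0r; apply: eq_bigr => l' nl.
    by rewrite eq_sym (negbTE nl) mul0r subr0.
  under eq_bigr => l _ do rewrite e.
  by rewrite sumrB sumQQc -big_distrl /= mulrBl mul1r.
apply: ler_wpM2r; first exact: O_ge0.
rewrite lerB //.
apply: le_trans (_ : \sum_l pk n0 i l * dl <= _).
  by rewrite -big_distrl /= rowsum mul1r.
by apply: ler_sum => l _; apply: ler_wpM2l.
Qed.

Lemma O_iter n0 dl k : dl <= 1 -> (forall i k, dl <= pk n0 i k) ->
  O (k * n0) <= (1 - dl) ^+ k.
Proof.
move=> hdl1 hdl; elim: k => [|k IH]; first by rewrite mul0n expr0 O_le1.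
rewrite mulSn exprS; apply: le_trans (O_contract _ _ _ hdl1 hdl) _.
by apply: ler_wpM2l => //; rewrite subr_ge0.
Qed.

Lemma O_eps : forall e : R, 0 < e -> exists N, forall n, (N <= n)%N -> O n <= e.
Proof.
move=> e he.
have [n0 [dl [dl0 dl1 hdl]]] := doeblin.
have hz : `|1 - dl| < 1 by rewrite ger0_norm ?subr_ge0 // ltrBlDr ltrDl.
have := cvg_expr hz; move/cvgrPdist_le => /(_ e he) [K _ HK].
exists (K * n0)%N => n Kn.
apply: le_trans (O_mono _ _ Kn) _; apply: le_trans (O_iter _ _ K dl1 hdl) _.
have := HK K (leqnn K); rewrite /= sub0r normrN; exact: le_trans (ler_norm _).
Qed.

Lemma chain_psi : exists psi : nat -> R,
  [/\ (forall n, psi n.+1 <= psi n), (psi n @[n --> \oo] --> (1 : R)) &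
      (forall n s s', pk n s s' <= psi n * pi s')].
Proof.
pose pm := \big[Order.min/1]_s pi s.
have pm0 : 0 < pm by apply: lt_bigmin => // s _; exact: pi_pos.
have pmle : forall s, pm <= pi s by move=> s; exact: (bigmin_le _ s pi).
exists (fun n => 1 + O n / pm); split.
- move=> n; rewrite lerD2l; apply: ler_wpM2r; first by rewrite invr_ge0 ltW.
  by have := O_mono1 1 n; rewrite add1n.
- apply/cvgrPdist_le => e he.
  have [N HN] := O_eps (e * pm) (mulr_gt0 he pm0).
  exists N => // n /= Nn.
  rewrite opprD addrA subrr sub0r normrN ger0_norm; last by rewrite divr_ge0 ?O_ge0 ?ltW.
  by rewrite ler_pdivrMr //; apply: HN.
- move=> n s s'.
  have h1 : pk n s s' - pi s' <= O n.
    rewrite -{1}(mulr1 (pk n s s')) -pi_sum -(stat n s') mulr_sumr -sumrB.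
    apply: le_trans (_ : \sum_j pi j * O n <= _).
      apply: ler_sum => j _; rewrite (mulrC (pk n s s')) -mulrBr.
      by apply: ler_wpM2l; [exact: ltW | exact: O_ge].
    by rewrite -big_distrl /= pi_sum mul1r.
  rewrite mulrDl mul1r -lerBlDl; apply: le_trans h1 _.
  rewrite -mulrA ler_peMr ?O_ge0 // ler_pdivlMl // mulr1; exact: pmle.
Qed.

End Chain.

Section Win.
Context (R : realType) (d : measure_display) (T : measurableType d)
  (B St : finType) (P : probability T R)
  (X : int -> T -> bool) (Y : int -> T -> B) (S : int -> T -> St)
  (H : FAIM P X Y S).

Definition win n (g h : 'I_n -> int) (w : T) : {ffun 'I_n -> bool * B * St} :=
  [ffun i => (X (g i) w, Y (g i) w, S (h i) w)].

Lemma mS k s : measurable [set w | S k w = s].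
Proof. exact: (FAIM_measS H). Qed.
Lemma mX k s : measurable [set w | X k w = s].
Proof. exact: (FAIM_measX H). Qed.
Lemma mY k s : measurable [set w | Y k w = s].
Proof. exact: (FAIM_measY H). Qed.

Lemma win_meas n g h v : measurable (win n g h @^-1` [set v]).
Proof.
have -> : win n g h @^-1` [set v] = [set w | forall i,
   ([set w | X (g i) w = (v i).1.1] `&` [set w | Y (g i) w = (v i).1.2]
    `&` [set w | S (h i) w = (v i).2]) w].
  apply/seteqP; split => w /=.
    by move=> <- i; rewrite ffunE.
  move=> Hw; apply/ffunP => i; rewrite ffunE.
  by case: (Hw i) => [[-> ->] ->]; case: (v i) => [[]].
apply: meas_forall => i; apply: measurableI; first apply: measurableI.
- exact: mX.
- exact: mY.
- exact: mS.
Qed.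

Lemma det_cases (V : finType) (f : T -> V) (Z : set T) v :
  (forall w w', f w = f w' -> Z w -> Z w') ->
  Z `&` f @^-1` [set v] = set0 \/
  (Z `&` f @^-1` [set v] = f @^-1` [set v] /\ exists w, f w = v).
Proof.
move=> det; have [[w [Zw fw]]|nex] := pselect (exists w, Z w /\ f w = v).
  right; split; last by exists w.
  apply/seteqP; split => w' /=; first by case.
  move=> fw'; split => //; apply: det Zw; by rewrite fw fw'.
left; apply/seteqP; split => w' //= [Zw fw]; apply: nex; by exists w'.
Qed.

Lemma det_meas n g h (Z : set T) :
  (forall w w', win n g h w = win n g h w' -> Z w -> Z w') -> measurable Z.
Proof.
move=> det; have := @Pr_fiber _ _ _ P _ (win n g h) Z.
move=> HH; apply: (proj1 (HH _)) => v.
case: (det_cases _ _ _ v det) => [->|[-> _]]; [exact: measurable0 | exact: win_meas].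
Qed.

Definition fw (j : int) n := win n (fun i : 'I_n => j + (i : nat)%:Z) (fun i => j + (i : nat)%:Z).
Definition pw (j : int) m := win m (fun i : 'I_m => j - (i.+1 : nat)%:Z)
   (fun i => j - (i.+1 : nat)%:Z - 1).

Lemma fut_eq j n w1 : futureXYS X Y S j n (fun k => X k w1) (fun k => Y k w1)
   (fun k => S k w1) = fw j n @^-1` [set fw j n w1].
Proof.
apply/seteqP; split => w /=.
  move=> Hw; apply/ffunP => i; rewrite !ffunE.
  by case: (Hw i (ltn_ord i)) => -> -> ->.
move=> E k kn; move/ffunP: E => /(_ (Ordinal kn)); rewrite !ffunE /=.
by case=> -> -> ->.
Qed.

Lemma past_eq j m w2 : pastXYS X Y S j m (fun k => X k w2) (fun k => Y k w2)
   (fun k => S (k - 1) w2) = pw j m @^-1` [set pw j m w2].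
Proof.
apply/seteqP; split => w /=.
  move=> Hw; apply/ffunP => i; rewrite !ffunE.
  by case: (Hw i.+1 (ltn_ord i)) => -> -> ->.
move=> E k /andP [k1 km].
have kn : (k.-1 < m)%N by rewrite prednK.
move/ffunP: E => /(_ (Ordinal kn)); rewrite !ffunE /= prednK //.
by case=> -> -> ->.
Qed.

Lemma det_cases2 (V W : finType) (f : T -> V) (g : T -> W) (Z : set T) s0 v :
  (forall w w', f w = f w' -> g w = g w' -> Z w -> Z w') ->
  Z `&` [set w | g w = s0] `&` f @^-1` [set v] = set0 \/
  (Z `&` [set w | g w = s0] `&` f @^-1` [set v] =
     [set w | g w = s0] `&` f @^-1` [set v] /\ exists w, f w = v).
Proof.
move=> det.
have [[w [[Zw gw] fw0]]|nex] := pselect (exists w, (Z `&` [set w | g w = s0]) w /\ f w = v).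
  right; split; last by exists w.
  apply/seteqP; split => w' /=; first by case=> [[]].
  move=> [gw' fw']; split => //; split => //; apply: det Zw; by rewrite ?fw0 ?fw' ?gw ?gw'.
left; apply/seteqP; split => w' //= [[Zw gw] fw']; apply: nex; by exists w'.
Qed.

Lemma ci_det j n m s0 (E F : set T) :
 (forall w w', fw j n w = fw j n w' -> S (j-1) w = S (j-1) w' -> E w -> E w') ->
 (forall w w', pw j m w = pw j m w' -> S (j-1) w = S (j-1) w' -> F w -> F w') ->
 Pr P (E `&` [set w | S (j - 1) w = s0] `&` F) * Pr P [set w | S (j - 1) w = s0] =
 Pr P (E `&` [set w | S (j - 1) w = s0]) * Pr P ([set w | S (j - 1) w = s0] `&` F).
Proof.
move=> dE dF; set C := [set w | S (j - 1) w = s0].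
have mC : measurable C by exact: mS.
have cE := fun v => det_cases2 _ _ _ _ _ s0 v dE.
have cF := fun u => det_cases2 _ _ _ _ _ s0 u dF.
have mEv : forall v, measurable (E `&` C `&` fw j n @^-1` [set v]).
  move=> v; case: (cE v) => [->|[-> _]]; first exact: measurable0.
  apply: measurableI => //; exact: win_meas.
have mFu : forall u, measurable (F `&` C `&` pw j m @^-1` [set u]).
  move=> u; case: (cF u) => [->|[-> _]]; first exact: measurable0.
  apply: measurableI => //; exact: win_meas.
have Zeq : forall v u, E `&` C `&` F `&` fw j n @^-1` [set v] `&` pw j m @^-1` [set u]
   = (E `&` C `&` fw j n @^-1` [set v]) `&` (F `&` C `&` pw j m @^-1` [set u]).
  move=> v u; apply/seteqP; split => w /=; tauto.
have mZ : forall v u, measurable (E `&` C `&` F `&` fw j n @^-1` [set v] `&` pw j m @^-1` [set u]).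
  by move=> v u; rewrite Zeq; apply: measurableI.
have dec1 : forall v, measurable (E `&` C `&` F `&` fw j n @^-1` [set v]) /\
   Pr P (E `&` C `&` F `&` fw j n @^-1` [set v]) = \sum_u
   Pr P (E `&` C `&` F `&` fw j n @^-1` [set v] `&` pw j m @^-1` [set u]).
  by move=> v; apply: Pr_fiber; exact: mZ.
have [_ ->] := Pr_fiber _ _ _ P _ _ _ (fun v => proj1 (dec1 v)).
have [_ ->] := Pr_fiber _ _ _ P _ _ _ mEv.
have eCF : C `&` F = F `&` C by rewrite setIC.
rewrite eCF.
have [_ ->] := Pr_fiber _ _ _ P _ _ _ mFu.
rewrite big_distrl /= big_distrl /=; apply: eq_bigr => v _.
rewrite (proj2 (dec1 v)) big_distrl big_distrr /=; apply: eq_bigr => u _.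
rewrite Zeq.
case: (cE v) => [->|[-> [w1 e1]]].
  by rewrite set0I Pr0 !mul0r.
case: (cF u) => [->|[-> [w2 e2]]].
  by rewrite setI0 Pr0 mulr0 mul0r.
have := FAIM_condindep H j n m (fun k => X k w1) (fun k => Y k w1) (fun k => S k w1)
  (fun k => X k w2) (fun k => Y k w2) (fun k => S (k - 1) w2) s0.
rewrite /= fut_eq past_eq e1 e2 -/C.
have -> : C `&` fw j n @^-1` [set v] `&` (C `&` pw j m @^-1` [set u]) =
   fw j n @^-1` [set v] `&` C `&` pw j m @^-1` [set u].
  apply/seteqP; split => w /=; tauto.
by rewrite [C `&` fw j n @^-1` _]setIC.
Qed.


Definition cw (I : seq int) (t : int) :=
  win (size I) (fun i => nth 0 I i + t) (fun i => nth 0 I i + t).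

Lemma cyl_eq I t t' w : cylXYS X Y S I t (fun k => X (k + t') w)
  (fun k => Y (k + t') w) (fun k => S (k + t') w) = cw I t @^-1` [set cw I t' w].
Proof.
apply/seteqP; split => w' /=.
  move=> Hw; apply/ffunP => i; rewrite !ffunE.
  by case: (Hw (nth 0 I i) (mem_nth 0 (ltn_ord i))) => -> -> ->.
move=> E k kI.
have ki : (index k I < size I)%N by rewrite index_mem.
move/ffunP: E => /(_ (Ordinal ki)); rewrite !ffunE /= nth_index //.
by case=> -> -> ->.
Qed.

Lemma fib_stat I t v : Pr P (cw I t @^-1` [set v]) = Pr P (cw I 0 @^-1` [set v]).
Proof.
have [[w e]|n1] := pselect (exists w, cw I t w = v).
  have := FAIM_stationary H I t (fun k => X (k + t) w) (fun k => Y (k + t) w)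
     (fun k => S (k + t) w).
  by rewrite !cyl_eq e.
have [[w e]|n2] := pselect (exists w, cw I 0 w = v).
  have := FAIM_stationary H I t (fun k => X (k + 0) w) (fun k => Y (k + 0) w)
     (fun k => S (k + 0) w).
  by rewrite !cyl_eq e.
have -> : cw I t @^-1` [set v] = set0.
  by apply/seteqP; split => w //= e; apply: n1; exists w.
have -> : cw I 0 @^-1` [set v] = set0.
  by apply/seteqP; split => w //= e; apply: n2; exists w.
by [].
Qed.

Lemma stat_det I t (G : {ffun 'I_(size I) -> bool * B * St} -> bool) :
  Pr P [set w | G (cw I t w)] = Pr P [set w | G (cw I 0 w)].
Proof.
have piece : forall t' v, [set w | G (cw I t' w)] `&` cw I t' @^-1` [set v] =
   if G v then cw I t' @^-1` [set v] else set0.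
  move=> t' v; apply/seteqP; split => w /=.
    by case=> Gw e; rewrite -e Gw.
  by case: ifP => Gv //= e; rewrite e.
have m : forall t' v, measurable ([set w | G (cw I t' w)] `&` cw I t' @^-1` [set v]).
  by move=> t' v; rewrite piece; case: ifP => _; [exact: win_meas | exact: measurable0].
rewrite (proj2 (Pr_fiber _ _ _ P _ _ _ (m t))) (proj2 (Pr_fiber _ _ _ P _ _ _ (m 0))).
apply: eq_bigr => v _; rewrite !piece; case: ifP => _ //; exact: fib_stat.
Qed.

Lemma st1 t s : Pr P [set w | S t w = s] = Pr P [set w | S 0 w = s].
Proof.
have E : forall t', [set w | S t' w = s] =
   [set w | ((cw [:: 0] t' w) ord0).2 == s].
  by move=> t'; apply/seteqP; split => w /=; rewrite ffunE /= add0r; [move=> -> | move/eqP].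
by rewrite !E; exact: (stat_det [:: 0] t (fun v => (v ord0).2 == s)).
Qed.

Lemma st2 (t : int) (n : nat) i k :
  Pr P ([set w | S t w = i] `&` [set w | S (t + n%:Z) w = k]) =
  Pr P ([set w | S 0 w = i] `&` [set w | S n%:Z w = k]).
Proof.
pose G := fun v : {ffun 'I_(size [:: 0; n%:Z]) -> bool * B * St} =>
  ((v ord0).2 == i) && ((v ord_max).2 == k).
have E : forall t', [set w | S t' w = i] `&` [set w | S (t' + n%:Z) w = k] =
   [set w | G (cw [:: 0; n%:Z] t' w)].
  move=> t'; apply/seteqP; split => w /=; rewrite /G !ffunE /= add0r (addrC n%:Z).
    by case=> -> ->; rewrite !eqxx.
  by case/andP => /eqP -> /eqP ->.
rewrite E stat_det -E add0r //.
Qed.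

Definition pi s := Pr P [set w | S 0 w = s].
Definition pk n s s' := ptransS P S n s s'.

Lemma pi_pos s : 0 < pi s.
Proof.
have [n [_ Hp]] := FAIM_irreducible H s s.
move: Hp; rewrite /ptransS.
have := Pr_ge0 _ _ _ P [set w | S 0 w = s]; rewrite le_eqVlt => /orP [/eqP <-|//].
by rewrite invr0 mulr0 ltxx.
Qed.

Lemma pi_neq0 s : pi s != 0.
Proof. by rewrite gt_eqF // pi_pos. Qed.

Lemma pk_ge0 n i k : 0 <= pk n i k.
Proof. by rewrite /pk /ptransS divr_ge0 // Pr_ge0. Qed.

Lemma joint (t : int) n i k :
  Pr P ([set w | S t w = i] `&` [set w | S (t + n%:Z) w = k]) = pi i * pk n i k.
Proof.
by rewrite st2 /pk /ptransS mulrC divfK // pi_neq0.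
Qed.

Lemma Pr_fibS (Z : set T) (t : int) :
  (forall s, measurable (Z `&` [set w | S t w = s])) ->
  Pr P Z = \sum_s Pr P (Z `&` [set w | S t w = s]).
Proof. move=> hm; exact: (proj2 (Pr_fiber _ _ _ P _ (S t) Z hm)). Qed.

Lemma rowsum n i : \sum_k pk n i k = 1.
Proof.
rewrite /pk /ptransS -mulr_suml -Pr_fibS ?divff //; first exact: pi_neq0.
by move=> s; apply: measurableI; apply: mS.
Qed.

Lemma stationary_pi n k : \sum_i pi i * pk n i k = pi k.
Proof.
under eq_bigr => i _ do rewrite -(joint 0) add0r setIC.
rewrite -Pr_fibS; first by rewrite /pi st1.
by move=> s; apply: measurableI; apply: mS.
Qed.

Lemma fw_S j n w w' k : fw j n w = fw j n w' -> (k < n)%N ->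
  (X (j + k%:Z) w, Y (j + k%:Z) w, S (j + k%:Z) w) =
  (X (j + k%:Z) w', Y (j + k%:Z) w', S (j + k%:Z) w').
Proof. by move=> e kn; move/ffunP: e => /(_ (Ordinal kn)); rewrite !ffunE. Qed.

Lemma pw_S j m w w' k : pw j m w = pw j m w' -> (k < m)%N ->
  (X (j - k.+1%:Z) w, Y (j - k.+1%:Z) w, S (j - k.+1%:Z - 1) w) =
  (X (j - k.+1%:Z) w', Y (j - k.+1%:Z) w', S (j - k.+1%:Z - 1) w').
Proof. by move=> e kn; move/ffunP: e => /(_ (Ordinal kn)); rewrite !ffunE. Qed.

Lemma ci' (j : int) n m s0 (E F : set T) :
 (forall w w', fw (j + 1) n w = fw (j + 1) n w' -> S j w = S j w' -> E w -> E w') ->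
 (forall w w', pw (j + 1) m w = pw (j + 1) m w' -> S j w = S j w' -> F w -> F w') ->
 Pr P (E `&` [set w | S j w = s0] `&` F) * Pr P [set w | S j w = s0] =
 Pr P (E `&` [set w | S j w = s0]) * Pr P ([set w | S j w = s0] `&` F).
Proof. by have := ci_det (j + 1) n m s0 E F; rewrite addrK. Qed.

Lemma CK m n i k : pk (m + n) i k = \sum_j pk m i j * pk n j k.
Proof.
have -> : pk (m + n) i k = Pr P ([set w | S 0 w = i] `&` [set w | S (m%:Z + n%:Z) w = k]) / pi i.
  by rewrite /pk /ptransS PoszD.
have mZ : forall s, measurable ([set w | S 0 w = i] `&` [set w | S (m%:Z + n%:Z) w = k]
   `&` [set w | S m%:Z w = s]).
  by move=> s; apply: measurableI; [apply: measurableI|]; apply: mS.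
rewrite (Pr_fibS _ m%:Z mZ) mulr_suml; apply: eq_bigr => j _.
have := ci' m%:Z n m j [set w | S (m%:Z + n%:Z) w = k] [set w | S 0 w = i].
have -> : Pr P [set w | S m%:Z w = j] = pi j by rewrite /pi st1.
have -> : [set w | S (m%:Z + n%:Z) w = k] `&` [set w | S m%:Z w = j] =
   [set w | S m%:Z w = j] `&` [set w | S (m%:Z + n%:Z) w = k] by rewrite setIC.
rewrite joint.
have -> : [set w | S m%:Z w = j] `&` [set w | S 0 w = i] =
   [set w | S 0 w = i] `&` [set w | S (0 + m%:Z) w = j].
  by rewrite add0r setIC.
rewrite joint.
have -> : [set w | S m%:Z w = j] `&` [set w | S (m%:Z + n%:Z) w = k] `&` [set w | S 0 w = i]
  = [set w | S 0 w = i] `&` [set w | S (m%:Z + n%:Z) w = k] `&` [set w | S m%:Z w = j].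
  by apply/seteqP; split => w /=; tauto.
move=> e.
have {}e : Pr P ([set w | S 0 w = i] `&` [set w | S (m%:Z + n%:Z) w = k] `&`
      [set w | S m%:Z w = j]) * pi j = pi j * pk n j k * (pi i * pk m i j).
  apply: e.
  - move=> w w' e eS; rewrite /=.
    have [n0|n0] := eqVneq n 0%N; first by rewrite n0 addr0 eS.
    have nlt : (n.-1 < n)%N by rewrite ltn_predL lt0n.
    have := fw_S _ _ _ _ n.-1 e nlt.
    have -> : m%:Z + 1 + n.-1%:Z = m%:Z + n%:Z by move: n0 => /eqP n0; lia.
    by case=> _ _ ->.
  - move=> w w' e eS; rewrite /=.
    have [m0|m0] := eqVneq m 0%N.
      have mz : m%:Z = 0 by rewrite m0.
      by rewrite mz in eS; rewrite -eS.
    have mlt : (m.-1 < m)%N by rewrite ltn_predL lt0n.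
    have := pw_S _ _ _ _ m.-1 e mlt.
    have -> : m%:Z + 1 - m.-1.+1%:Z - 1 = 0 by move: m0 => /eqP m0; lia.
    by case=> _ _ ->.
have {}e : Pr P ([set w | S 0 w = i] `&` [set w | S (m%:Z + n%:Z) w = k] `&`
      [set w | S m%:Z w = j]) = pi i * pk m i j * pk n j k.
  apply: (mulIf (pi_neq0 j)); rewrite e; ring.
rewrite e; field; exact: pi_neq0.
Qed.


Lemma pi_sum : \sum_s pi s = 1.
Proof.
rewrite /pi; under eq_bigr => s _ do rewrite -(setTI [set w | S 0 w = s]).
rewrite -Pr_fibS; first by rewrite /Pr probability_setT.
by move=> s; rewrite setTI; exact: mS.
Qed.

Lemma fw0 n w w' k : fw 0 n w = fw 0 n w' -> (k < n)%N ->
  [/\ X k%:Z w = X k%:Z w', Y k%:Z w = Y k%:Z w' & S k%:Z w = S k%:Z w'].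
Proof. by move=> e kn; have := fw_S _ _ _ _ _ e kn; rewrite add0r; case=> -> -> ->. Qed.

Lemma block_meas lo hi x y : measurable (blockXY X Y lo hi x y).
Proof.
apply: (det_meas hi.+1 (fun i : 'I_hi.+1 => 0 + (i : nat)%:Z) (fun i => 0 + (i : nat)%:Z)).
move=> w w' e Hw k /andP [lk kh].
have [eX eY _] := fw0 _ _ _ k e (leq_ltn_trans kh (ltnSn hi)).
by rewrite -eX -eY; apply: Hw; rewrite lk kh.
Qed.

Lemma main_ineq (psi : nat -> R) :
  (forall n s s', pk n s s' <= psi n * pi s') ->
  forall (N M L : nat), (1 <= L)%N -> (L <= M)%N -> (M < N)%N ->
    forall (x : int -> bool) (y : int -> B),
      Pr P (blockXY X Y 1 L x y `&` blockXY X Y M.+1 N x y) <=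
      psi (M - L)%N * Pr P (blockXY X Y 1 L x y) * Pr P (blockXY X Y M.+1 N x y).
Proof.
move=> hpsi N M L L1 LM MN x y.
set A := blockXY X Y 1 L x y; set Bk := blockXY X Y M.+1 N x y.
have mA : measurable A by exact: block_meas.
have mB : measurable Bk by exact: block_meas.
have mSL : forall s, measurable [set w | S L%:Z w = s] by move=> s; exact: mS.
have mSM : forall s, measurable [set w | S M%:Z w = s] by move=> s; exact: mS.
have dec1 : Pr P (A `&` Bk) = \sum_s \sum_s' Pr P (A `&` Bk `&` [set w | S L%:Z w = s]
     `&` [set w | S M%:Z w = s']).
  rewrite (Pr_fibS _ L%:Z); last by move=> s; apply: measurableI => //; apply: measurableI.
  apply: eq_bigr => s _; apply: Pr_fibS => s'.
  by apply: measurableI => //; apply: measurableI => //; apply: measurableI.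
have decA : Pr P A = \sum_s Pr P (A `&` [set w | S L%:Z w = s]).
  by apply: Pr_fibS => s; apply: measurableI.
have decB : Pr P Bk = \sum_s Pr P (Bk `&` [set w | S M%:Z w = s]).
  by apply: Pr_fibS => s; apply: measurableI.
rewrite dec1 decA decB -mulrA big_distrl /= big_distrr /=.
apply: ler_sum => s _; rewrite big_distrr /= big_distrr /=; apply: ler_sum => s' _.
have ci1 := ci' L%:Z (N - L) L s (Bk `&` [set w | S M%:Z w = s']) A.
have ci2 := ci' M%:Z (N - M) (M - L) s' Bk [set w | S L%:Z w = s].
have {ci1} ci1 : Pr P (Bk `&` [set w | S M%:Z w = s'] `&` [set w | S L%:Z w = s] `&` A) * pi s
   = Pr P (Bk `&` [set w | S M%:Z w = s'] `&` [set w | S L%:Z w = s]) *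
     Pr P (A `&` [set w | S L%:Z w = s]).
  rewrite /pi -(st1 L%:Z) (setIC A); apply: ci1.
  - move=> w w' e eS [Bw Sw]; split.
      move=> k kr; have [bx byy] := Bw k kr; move/andP: (kr) => [k1 kN].
      have kk : (k - L - 1 < N - L)%N by lia.
      have := fw_S _ _ _ _ _ e kk.
      have -> : L%:Z + 1 + (k - L - 1)%N%:Z = k%:Z by lia.
      by case=> eX eY _; rewrite -eX -eY.
    have [ML|ML] := eqVneq M L; first by move: Sw; rewrite /= ML eS.
    have kk : (M - L - 1 < N - L)%N by move/eqP: ML => ML; lia.
    have := fw_S _ _ _ _ _ e kk.
    have -> : L%:Z + 1 + (M - L - 1)%N%:Z = M%:Z by move/eqP: ML => ML; lia.
    by case=> _ _ e3; rewrite /= -e3.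
  - move=> w w' e eS Aw k kr; have [ax ay] := Aw k kr; move/andP: (kr) => [k1 kL].
    have kk : (L - k < L)%N by lia.
    have := pw_S _ _ _ _ _ e kk.
    have -> : L%:Z + 1 - (L - k).+1%:Z = k%:Z by lia.
    by case=> eX eY _; rewrite -eX -eY.
have {ci2} ci2 : Pr P (Bk `&` [set w | S M%:Z w = s'] `&` [set w | S L%:Z w = s]) * pi s'
   = Pr P (Bk `&` [set w | S M%:Z w = s']) * (pi s * pk (M - L) s s').
  rewrite /pi -(st1 M%:Z) -(joint L%:Z).
  have -> : (L%:Z + (M - L)%N%:Z) = M%:Z by lia.
  rewrite (setIC [set w | S L%:Z w = s]); apply: ci2.
  - move=> w w' e eS Bw k kr; have [bx byy] := Bw k kr; move/andP: (kr) => [k1 kN].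
    have kk : (k - M - 1 < N - M)%N by lia.
    have := fw_S _ _ _ _ _ e kk.
    have -> : M%:Z + 1 + (k - M - 1)%N%:Z = k%:Z by lia.
    by case=> eX eY _; rewrite -eX -eY.
  - move=> w w' e eS /= Sw.
    have [ML|ML] := eqVneq M L; first by move: eS; rewrite ML -Sw => ->.
    have kk : (M - L - 1 < M - L)%N by move/eqP: ML => ML; lia.
    have := pw_S _ _ _ _ _ e kk.
    have -> : M%:Z + 1 - (M - L - 1).+1%:Z - 1 = L%:Z by move/eqP: ML => ML; lia.
    by case=> _ _ <-.
set Tv := Pr P (A `&` Bk `&` _ `&` _).
have eT : Tv = Pr P (Bk `&` [set w | S M%:Z w = s'] `&` [set w | S L%:Z w = s] `&` A).
  by rewrite /Tv; congr (Pr P _); apply/seteqP; split => w /=; tauto.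
have ps := pi_pos s; have ps' := pi_pos s'.
rewrite -(ler_pM2r ps) -(ler_pM2r ps').
have -> : Tv * pi s * pi s' = Pr P (A `&` [set w | S L%:Z w = s]) *
    Pr P (Bk `&` [set w | S M%:Z w = s']) * pi s * pk (M - L) s s'.
  rewrite eT ci1 mulrAC ci2; ring.
set a := Pr P (A `&` _); set b := Pr P (Bk `&` _).
have a0 : 0 <= a by exact: Pr_ge0.
have b0 : 0 <= b by exact: Pr_ge0.
apply: le_trans (_ : a * b * pi s * (psi (M - L)%N * pi s') <= _).
  apply: ler_wpM2l; last exact: hpsi.
  by rewrite !mulr_ge0 // ltW.
by rewrite le_eqVlt; apply/orP; left; apply/eqP; ring.
Qed.

Lemma lemma4_sec : exists psi : nat -> R,
    (forall n, psi n.+1 <= psi n) /\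
    (psi n @[n --> \oo] --> (1 : R)) /\
    forall (N M L : nat), (1 <= L)%N -> (L <= M)%N -> (M < N)%N ->
    forall (x : int -> bool) (y : int -> B),
      Pr P (blockXY X Y 1 L x y `&` blockXY X Y M.+1 N x y) <=
      psi (M - L)%N * Pr P (blockXY X Y 1 L x y) * Pr P (blockXY X Y M.+1 N x y).
Proof.
have [psi [h1 h2 h3]] := chain_psi R St pk pi pk_ge0 rowsum CK stationary_pi
  pi_pos pi_sum (FAIM_irreducible H) (FAIM_aperiodic H).
exists psi; split => //; split => //; exact: main_ineq.
Qed.

End Win.

Theorem lemma4 (R : realType) (d : measure_display) (T : measurableType d)
  (B St : finType) (P : probability T R)
  (X : int -> T -> bool) (Y : int -> T -> B) (S : int -> T -> St) :
  FAIM P X Y S ->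
  exists psi : nat -> R,
    (forall n, psi n.+1 <= psi n) /\
    (psi n @[n --> \oo] --> (1 : R)) /\
    forall (N M L : nat), (1 <= L)%N -> (L <= M)%N -> (M < N)%N ->
    forall (x : int -> bool) (y : int -> B),
      Pr P (blockXY X Y 1 L x y `&` blockXY X Y M.+1 N x y) <=
      psi (M - L)%N * Pr P (blockXY X Y 1 L x y) * Pr P (blockXY X Y M.+1 N x y).
Proof. move=> H; exact: (lemma4_sec R d T B St P X Y S H). Qed.
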